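(* Let $A\in\mathbb{R}^{n\times n}$, $C\in\mathbb{R}^{m\times n}$. The linear system $x^+=Ax$, $y=Cx$ (with $\mathcal{X}=\mathbb{R}^n$, $\mathcal{Y}=\mathbb{R}^m$) is deadbeat observable if and only if there exists an integer $p\ge1$ such that for every $x\in\mathbb{R}^n$ the set $[x]_{p-1}$ is either a singleton or empty.
   Context: For a system $x^+=f(x)$, $y=h(x)$ with $f:\mathcal{X}\to\mathcal{X}$, $h:\mathcal{X}\to\mathcal{Y}$, inverse images are set-valued: $f^{-1}(x):=\{\eta\in\mathcal{X}: f(\eta)=x\}$, $h^{-1}(y):=\{\eta:h(\eta)=y\}$; images of sets are $f(S)=\{f(s):s\in S\}$ and $[S]_k:=\bigcup_{s\in S}[s]_k$. Define $[x]_0:=h^{-1}(h(x))$, and for $k\ge0$: $[x]_k^+:=f([f^{-1}(x)]_k)$, $[x]_{k+1}:=[x]_k^+\cap[x]_0$. Here $f(x)=Ax$, $h(x)=Cx$. Solutions: $\phi(0,x)=x$, $\phi(k+1,x)=f(\phi(k,x))$. Given $g:\mathcal{X}\times\mathcal{Y}\rightrightarrows\mathcal{X}$, a solution of $\hat x^+\in g(\hat x,h(x))$ driven by $x^+=f(x)$ is any sequence $\psi(k,\hat x,x)$ with $\psi(0,\hat x,x)=\hat x$, $\psi(k+1,\hat x,x)\in g(\psi(k,\hat x,x),h(\phi(k,x)))$. The system $\hat x^+\in g(\hat x,y)$ is a deadbeat observer if there is $p\ge1$ such that all such solutions satisfy $\psi(k,\hat x,x)=\phi(k,x)$ for all $x,\hat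 x\in\mathcal{X}$ and $k\ge p$; the system is deadbeat observable if a deadbeat observer exists. *)

(* Defs.v *)
From HB Require Import structures.
From mathcomp Require Import all_boot all_order all_algebra.
Set Implicit Arguments. Unset Strict Implicit. Unset Printing Implicit Defensive.
Import GRing.Theory Num.Theory.

Section Generic.
Variables (X Y : Type) (f : X -> X) (h : X -> Y).

(* [x]_k as a subset of X:
   [x]_0 = h^{-1}(h x),
   [x]_{k+1} = f([f^{-1}(x)]_k) ∩ [x]_0,
   where [S]_k = ⋃_{s∈S} [s]_k and f^{-1}(x) = {e | f e = x}. *)
Fixpoint cls (k : nat) (x : X) : X -> Prop :=
  match k with
  | 0 => fun eta => h eta = h x
  | k'.+1 => fun eta =>
      (exists s, (exists e, f e = x /\ cls k' e s) /\ f s = eta)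
      /\ h eta = h x
  end.

Definition phi (k : nat) (x : X) : X := iter k f x.

Definition is_obs_solution (g : X -> Y -> X -> Prop) (xhat x : X)
  (psi : nat -> X) : Prop :=
  psi 0 = xhat /\ forall k, g (psi k) (h (phi k x)) (psi k.+1).

Definition setvalued_nonempty (g : X -> Y -> X -> Prop) : Prop :=
  forall xh y, exists z, g xh y z.

Definition deadbeat_observer (g : X -> Y -> X -> Prop) : Prop :=
  exists p : nat, (1 <= p)%N /\
    forall x xhat psi, is_obs_solution g xhat x psi ->
      forall k, (p <= k)%N -> psi k = phi k x.

Definition deadbeat_observable : Prop :=
  exists g, setvalued_nonempty g /\ deadbeat_observer g.

End Generic.

(* Main.v *)
Require Import Defs.
From HB Require Import structures.
From mathcomp Require Import all_boot all_order all_algebra.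
From Stdlib Require Import Classical ClassicalEpsilon.
Import GRing.Theory Num.Theory.
Local Open Scope ring_scope.

Lemma iterA_sub (R : realFieldType) (n : nat) (A : 'M[R]_n) k (a b : 'cV[R]_n) :
  iter k (fun v => A *m v) (a - b) = iter k (fun v => A *m v) a - iter k (fun v => A *m v) b.
Proof. elim: k => [//|k IH]; by rewrite !iterS IH mulmxBr. Qed.

Lemma iterA0 (R : realFieldType) (n : nat) (A : 'M[R]_n) k :
  iter k (fun v => A *m v) (0 : 'cV[R]_n) = 0.
Proof. elim: k => [//|k IH]; by rewrite iterS IH mulmx0. Qed.

Lemma cls_char (R : realFieldType) (n m : nat) (A : 'M[R]_n) (C : 'M[R]_(m, n)) k :
  forall x eta, cls (fun x : 'cV[R]_n => A *m x) (fun x => C *m x) k x eta <->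
  exists xi ze, iter k (fun v => A *m v) xi = eta /\ iter k (fun v => A *m v) ze = x /\
    forall j, (j <= k)%N -> C *m iter j (fun v => A *m v) xi = C *m iter j (fun v => A *m v) ze.
Proof.
elim: k => [|k IH] x eta /=.
  split; first by move=> H; exists eta, x; split=> //; split=> // j; rewrite leqn0 => /eqP ->.
  by case=> xi [ze [<- [<- H]]]; exact: (H 0%N).
split.
  case=> [[s [[e [Ae He]] As]] Ch].
  have [xi [ze [Hxi [Hze Hj]]]] := (IH e s).1 He.
  exists xi, ze; split; first by rewrite /= Hxi.
  split; first by rewrite /= Hze.
  move=> j; rewrite leq_eqVlt => /orP [/eqP ->|]; first by rewrite /= Hxi Hze As Ae.
  by rewrite ltnS; apply: Hj.
case=> xi [ze [Hxi [Hze Hj]]]; split.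
  exists (iter k (fun v => A *m v) xi); split; last by rewrite -Hxi.
  exists (iter k (fun v => A *m v) ze); split; first by rewrite -Hze.
  apply/(IH _ _).2; exists xi, ze; split=> //; split=> // j Hjk; apply: Hj; exact: leqW.
by rewrite -Hxi -Hze; exact: (Hj k.+1 (leqnn _)).
Qed.

Definition Wp {R : realFieldType} {n m : nat} (A : 'M[R]_n) (C : 'M[R]_(m, n))
  (k : nat) (e : 'cV[R]_n) : Prop :=
  exists xi, iter k (fun v => A *m v) xi = e /\
    forall j, (j < k)%N -> C *m iter j (fun v => A *m v) xi = 0.

Lemma Wp_S (R : realFieldType) (n m : nat) (A : 'M[R]_n) (C : 'M[R]_(m, n)) k e :
  Wp A C k.+1 e -> Wp A C k e.
Proof.
case=> xi [Hxi Hj]; exists (A *m xi); split; first by rewrite -iterSr.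
by move=> j Hjk; rewrite -iterSr; apply: Hj.
Qed.

Lemma Wp_mono (R : realFieldType) (n m : nat) (A : 'M[R]_n) (C : 'M[R]_(m, n)) k e :
  Wp A C k e -> forall j, (j <= k)%N -> Wp A C j e.
Proof.
elim: k => [|k IH] H j.
  by rewrite leqn0 => /eqP ->.
rewrite leq_eqVlt => /orP [/eqP ->|] //; rewrite ltnS; apply: IH; exact: Wp_S.
Qed.

Lemma Wp0 (R : realFieldType) (n m : nat) (A : 'M[R]_n) (C : 'M[R]_(m, n)) k :
  Wp A C k 0.
Proof. by exists 0; split; [exact: iterA0 | move=> j _; rewrite iterA0 mulmx0]. Qed.

Lemma max_lemma (P : nat -> Prop) b :
  P 0%N -> (forall k, P k -> (k < b)%N) -> exists K, P K /\ forall k, P k -> (k <= K)%N.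
Proof.
elim: b => [|b IH] H0 Hb; first by have := Hb _ H0.
case: (classic (P b)) => Pb; first by exists b; split=> // k /Hb.
apply: IH => // k Pk; have := Hb _ Pk; rewrite ltnS leq_eqVlt => /orP [/eqP E|//].
by rewrite E in Pk.
Qed.

Fixpoint solf {X Y : Type} (ch : X -> Y -> X) (x0 : X) (yy : nat -> Y) (k : nat) : X :=
  match k with 0%N => x0 | k'.+1 => ch (solf ch x0 yy k') (yy k') end.

Lemma solf_prefix {X Y : Type} (ch : X -> Y -> X) x0 yy yy' k :
  (forall j, (j < k)%N -> yy j = yy' j) -> solf ch x0 yy k = solf ch x0 yy' k.
Proof.
elim: k => [//|k IH] H /=; rewrite IH; last by move=> j Hj; apply: H; exact: ltnW.
by rewrite H.
Qed.

Lemma obs_same (R : realFieldType) (n m : nat) (A : 'M[R]_n) (C : 'M[R]_(m, n))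
  (g : 'cV[R]_n -> 'cV[R]_m -> 'cV[R]_n -> Prop) p :
  setvalued_nonempty g ->
  (forall x xhat psi, is_obs_solution (fun x : 'cV[R]_n => A *m x) (fun x => C *m x) g xhat x psi ->
      forall k, (p <= k)%N -> psi k = phi (fun x : 'cV[R]_n => A *m x) k x) ->
  forall xi ze : 'cV[R]_n, (forall j, (j < p)%N -> C *m iter j (fun v => A *m v) xi = C *m iter j (fun v => A *m v) ze) ->
  iter p (fun v => A *m v) xi = iter p (fun v => A *m v) ze.
Proof.
move=> Hne Hd xi ze Hj.
pose ch := fun xh y => proj1_sig (constructive_indefinite_description _ (Hne xh y)).
have Hch : forall xh y, g xh y (ch xh y).
  by move=> xh y; rewrite /ch; case: constructive_indefinite_description.
pose yy := fun (x : 'cV[R]_n) (k : nat) => C *m phi (fun x : 'cV[R]_n => A *m x) k x.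
have Hsol : forall x, is_obs_solution (fun x : 'cV[R]_n => A *m x) (fun x => C *m x) g 0 x
     (solf ch 0 (yy x)).
  by move=> x; split=> // k /=; apply: Hch.
have E1 := Hd _ _ _ (Hsol xi) p (leqnn _).
have E2 := Hd _ _ _ (Hsol ze) p (leqnn _).
rewrite /phi in E1 E2; rewrite -E1 -E2; apply: solf_prefix => j Hjp.
by rewrite /yy /phi; apply: Hj.
Qed.

Lemma cond_to_obs (R : realFieldType) (n m : nat) (A : 'M[R]_n) (C : 'M[R]_(m, n)) p :
  (1 <= p)%N ->
  (forall xi : 'cV[R]_n, (forall j, (j < p)%N -> C *m iter j (fun v => A *m v) xi = 0) ->
     iter (p - 1) (fun v => A *m v) xi = 0) ->
  deadbeat_observable (fun x : 'cV[R]_n => A *m x) (fun x : 'cV[R]_n => C *m x).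
Proof.
move=> Hp Hv.
have Wz : forall k e, Wp A C k e -> (p <= k)%N -> e = 0.
  move=> k e [xi [<- Hj]] Hk.
  have Hk' : (p - 1 <= k)%N by rewrite leq_subLR; apply: leq_trans Hk _; exact: leq_addl.
  rewrite -(subnK Hk') iterD Hv ?iterA0 // => j Hjp; apply: Hj; exact: leq_trans Hjp Hk.
pose good := fun (xh : 'cV[R]_n) (y : 'cV[R]_m) (w : 'cV[R]_n) =>
  C *m w = C *m xh - y /\
  forall k, (exists w', Wp A C k w' /\ C *m w' = C *m xh - y) -> Wp A C k w.
pose g := fun xh y (out : 'cV[R]_n) =>
  (exists w, good xh y w /\ out = A *m (xh - w)) \/ ~ (exists w, good xh y w).
exists g; split.
  move=> xh y; case: (classic (exists w, good xh y w)) => [[w Hw]|Hn].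
    by exists (A *m (xh - w)); left; exists w.
  by exists 0; right.
exists p; split=> // x xhat psi [H0 Hs].
have Inv : forall k, Wp A C k (psi k - phi (fun x : 'cV[R]_n => A *m x) k x).
  elim=> [|k IH]; first by exists (psi 0%N - x); split=> //.
  have Hex : exists w, good (psi k) (C *m phi (fun x : 'cV[R]_n => A *m x) k x) w.
    set z := C *m psi k - C *m phi (fun x : 'cV[R]_n => A *m x) k x.
    have Ez : C *m (psi k - phi (fun x : 'cV[R]_n => A *m x) k x) = z by rewrite mulmxBr.
    case: (classic (z = 0)) => [z0|zn0].
      exists 0; split; first by rewrite mulmx0 -/z z0.
      by move=> k' _; exact: Wp0.
    pose P := fun k' => exists w', Wp A C k' w' /\ C *m w' = z.
    have [K [[w' [HwK Cw]] HK]] : exists K, P K /\ forall k', P k' -> (k' <= K)%N.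
      apply: (@max_lemma P p).
        by exists (psi k - phi (fun x : 'cV[R]_n => A *m x) k x); split=> //; apply: Wp_mono IH _ _.
      move=> k' [w'' [Hw'' Cw'']]; rewrite ltnNge; apply/negP => Hk'.
      by apply: zn0; rewrite -Cw'' (Wz _ _ Hw'' Hk') mulmx0.
    exists w'; split=> // k' Pk'; apply: Wp_mono HwK _ _; exact: HK.
  case: (Hs k) => [[w [[Cw Hw] ->]]|Hn]; last by case: (Hn Hex).
  have Hwk : Wp A C k w.
    apply: Hw; exists (psi k - phi (fun x : 'cV[R]_n => A *m x) k x); split=> //.
    by rewrite mulmxBr.
  case: IH => [xi1 [E1 H1]]; case: Hwk => [xi2 [E2 H2]].
  exists (xi1 - xi2); split.
    rewrite iterS iterA_sub E1 E2 /phi iterS -/(phi _ k x) !mulmxBr.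
    by rewrite addrAC.
  move=> j; rewrite ltnS leq_eqVlt => /orP [/eqP ->|Hjk].
    by rewrite iterA_sub E1 E2 !mulmxBr Cw subrr.
  by rewrite iterA_sub mulmxBr H1 // H2 // subrr.
move=> k Hk; apply/subr0_eq; exact: Wz (Inv k) Hk.
Qed.

Theorem theorem1 (R : realFieldType) (n m : nat)
  (A : 'M[R]_n) (C : 'M[R]_(m, n)) :
  deadbeat_observable (fun x : 'cV[R]_n => A *m x)
                      (fun x : 'cV[R]_n => C *m x)
  <->
  exists p : nat, (1 <= p)%N /\
    forall x : 'cV[R]_n,
      let S := cls (fun x : 'cV[R]_n => A *m x)
                   (fun x : 'cV[R]_n => C *m x) (p - 1) x in
      (exists z, forall eta, S eta <-> eta = z) \/ (forall eta, ~ S eta).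
Proof.
split.
  case=> g [Hne [p [Hp Hd]]].
  exists p.+1; split=> // x /=; rewrite subn1 /=.
  have Hx : forall eta, cls (fun x : 'cV[R]_n => A *m x) (fun x : 'cV[R]_n => C *m x) p x eta -> eta = x.
    move=> eta /(cls_char _ _ _ _ _ _ _ _).1 [xi [ze [<- [<- Hj]]]].
    apply: (@obs_same _ _ _ A C g p Hne Hd) => j Hjp; apply: Hj; exact: ltnW.
  case: (classic (exists eta, cls (fun x : 'cV[R]_n => A *m x) (fun x : 'cV[R]_n => C *m x) p x eta)) => [[e0 He0]|Hn].
    left; exists x => eta; split; first exact: Hx.
    by move=> ->; move: (He0); rewrite (Hx _ He0).
  by right => eta He; apply: Hn; exists eta.
case=> p [Hp Hc]; apply: (@cond_to_obs _ _ _ A C p Hp) => xi Hj.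
have Hz : cls (fun x : 'cV[R]_n => A *m x) (fun x : 'cV[R]_n => C *m x) (p - 1) 0 0.
  apply/(cls_char _ _ _ _ _ _ _ _).2; exists 0, 0; split; first exact: iterA0.
  by split; first exact: iterA0.
have Hxi : cls (fun x : 'cV[R]_n => A *m x) (fun x : 'cV[R]_n => C *m x) (p - 1) 0
             (iter (p - 1) (fun v => A *m v) xi).
  apply/(cls_char _ _ _ _ _ _ _ _).2; exists xi, 0; split=> //; split; first exact: iterA0.
  move=> j Hjp; rewrite iterA0 mulmx0; apply: Hj.
  by apply: leq_ltn_trans Hjp _; rewrite subn1 prednK.
case: (Hc 0) => /= [[z Hzz]|He]; last by case: (He _ Hz).
by rewrite ((Hzz _).1 Hxi) -((Hzz _).1 Hz).
Qed.
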